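(* Let $a<b<c$ be elements of $\mathcal{C}_n$ and let $k$ be an integer with $n-c\le k\le n-b-1$. Then the layer $\mathcal{L}^{k}_{c}\left(\triangle^{(n)}\{a,b,c\}\right)=\{a_ib_{n-k-i}c_k:\ 0\le i\le n-k\}$ is a subsemiring of $\triangle^{(n)}\{a,b,c\}$.
   Context: $\mathcal{C}_n=\{0,1,\dots,n-1\}$ with its usual order; $\widehat{\mathcal{E}}_{\mathcal{C}_n}$ is the set of all order-preserving maps $\mathcal{C}_n\to\mathcal{C}_n$ (not required to fix $0$), a semiring with $(\alpha+\beta)(x)=\max(\alpha(x),\beta(x))$ and $(\alpha\cdot\beta)(x)=\beta(\alpha(x))$. The notation $a_ib_\ell c_k$ (with $i+\ell+k=n$) denotes the map sending $0,\dots,i-1$ to $a$, the next $\ell$ elements to $b$ and the last $k$ elements to $c$. The triangle $\triangle^{(n)}\{a,b,c\}$ is the set of $\alpha\in\widehat{\mathcal{E}}_{\mathcal{C}_n}$ with image in $\{a,b,c\}$; the layer $\mathcal{L}^{k}_{c}$ is the set of elements of the triangle mapping exactly $k$ elements of $\mathcal{C}_n$ to $c$. *)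

(* Defs.v *)
From mathcomp Require Import all_boot.
Set Implicit Arguments. Unset Strict Implicit. Unset Printing Implicit Defensive.

(* Maps C_n -> C_n, with C_n = 'I_n = {0,...,n-1} ordered as naturals. *)
Definition map_n (n : nat) := {ffun 'I_n -> 'I_n}.

Definition ord_pres (n : nat) (f : map_n n) : Prop :=
  forall x y : 'I_n, x <= y -> f x <= f y.

Definition splus (n : nat) (f g : map_n n) : map_n n :=
  [ffun x => if f x <= g x then g x else f x].
Definition smul (n : nat) (f g : map_n n) : map_n n :=
  [ffun x => g (f x)].

Definition triangle (n : nat) (a b c : 'I_n) (f : map_n n) : Prop :=
  ord_pres f /\ forall x : 'I_n, f x \in [:: a; b; c].

Definition layer (n : nat) (a b c : 'I_n) (k : nat) (f : map_n n) : Prop :=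
  triangle a b c f /\ #|[set x : 'I_n | f x == c]| = k.

(* the map a_i b_l c_k (k = n - i - l) *)
Definition abc_map (n : nat) (a b c : 'I_n) (i l : nat) : map_n n :=
  [ffun x : 'I_n => if (x < i)%N then a else if (x < i + l)%N then b else c].

Definition subsemiring (n : nat) (S T : map_n n -> Prop) : Prop :=
  (forall f, S f -> T f) /\
  (forall f g, S f -> S g -> S (splus f g)) /\
  (forall f g, S f -> S g -> S (smul f g)).

(* Main.v *)
Require Import Defs.
From mathcomp Require Import all_boot zify.

Lemma card_lt (n m : nat) : m <= n -> #|[set x : 'I_n | x < m]| = m.
Proof.
move=> hm.
have -> : [set x : 'I_n | x < m] = (widen_ord hm) @: [set: 'I_m].
  apply/setP => x; rewrite inE; apply/idP/imsetP.
  - move=> hx; exists (Ordinal hx) => //; exact: val_inj.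
  - by case=> y _ ->; rewrite /= ltn_ord.
rewrite card_imset ?cardsT ?card_ord //.
by move=> u v /(congr1 val) /= /val_inj.
Qed.

Lemma downset (n : nat) (D : {set 'I_n}) :
  (forall x y : 'I_n, x <= y -> y \in D -> x \in D) ->
  forall x : 'I_n, (x \in D) = (x < #|D|).
Proof.
move=> hD x; apply/idP/idP => hx.
- have sub : [set y : 'I_n | y < x.+1] \subset D.
    by apply/subsetP => y; rewrite inE ltnS => hy; apply: hD hy hx.
  have := subset_leq_card sub; rewrite card_lt //; exact: ltn_ord.
- case: (boolP (x \in D)) => // hn; exfalso.
  have sub : D \subset [set y : 'I_n | y < x].
    apply/subsetP => y hy; rewrite inE ltnNge; apply/negP => le.
    by rewrite (hD _ _ le hy) in hn.
  have := subset_leq_card sub; rewrite card_lt; [lia | exact: ltnW (ltn_ord x)].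
Qed.
Section S.
Variables (n : nat) (a b c : 'I_n) (k : nat).
Hypotheses (hab : a < b) (hbc : b < c) (hk : k <= n).

Lemma vals (f : map_n n) x : triangle a b c f ->
  [\/ f x = a, f x = b | f x = c].
Proof. by case=> _ /(_ x); rewrite !inE => /or3P [] /eqP; constructor. Qed.

Lemma layer_char f : layer a b c k f <->
  triangle a b c f /\ forall x, (f x == c) = (n - k <= x).
Proof.
split.
- case=> ht hcard; split => // x.
  set D := ~: [set x : 'I_n | f x == c].
  have hD : forall x y : 'I_n, x <= y -> y \in D -> x \in D.
    move=> u v le; rewrite !inE => hv.
    have fv : f v < c by case: (@vals f v ht) => e; rewrite e in hv *; rewrite ?eqxx in hv => //; lia.
    have := ht.1 _ _ le => fu; apply/negP => /eqP e; rewrite e in fu; lia.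
  have cD : #|D| = n - k by rewrite cardsCs setCK hcard card_ord.
  have := @downset n D hD x; rewrite cD !inE => e.
  by apply/idP/idP => h; [rewrite leqNgt -e negbK | apply/negPn; rewrite e -leqNgt].
- case=> ht hc; split => //.
  have -> : [set x : 'I_n | f x == c] = ~: [set x : 'I_n | x < n - k].
    by apply/setP => x; rewrite !inE hc leqNgt.
  by rewrite cardsCs setCK card_ord card_lt ?leq_subr //; lia.
Qed.
End S.

Theorem proposition29 (n : nat) (a b c : 'I_n) (k : nat) :
  a < b -> b < c -> n - c <= k -> k <= n - b - 1 ->
  (forall f : map_n n,
     layer a b c k f <-> exists2 i : nat, i <= n - k & f = abc_map a b c i (n - k - i)) /\
  subsemiring (layer a b c k) (triangle a b c).
Proof.
move=> hab hbc hck hkb.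
have hk : k <= n by lia.
have LC := @layer_char n a b c k hab hbc hk.
have bnd : forall (f : map_n n) x, triangle a b c f -> f x <= c.
  by move=> f x ht; case: (@vals n a b c f x ht) => ->; lia.
split.
  move=> f; split.
  - move/LC => [ht hc].
    set A := [set x : 'I_n | f x == a].
    have hA : forall x y : 'I_n, x <= y -> y \in A -> x \in A.
      move=> u v le; rewrite !inE => /eqP hv.
      have := ht.1 _ _ le; rewrite hv => fu.
      by case: (@vals n a b c f u ht) => e; rewrite e ?eqxx // in fu *; lia.
    have hi : #|A| <= n - k.
      have sub : A \subset [set x : 'I_n | x < n - k].
        apply/subsetP => x; rewrite !inE => /eqP e; rewrite ltnNge -hc e.
        by rewrite -val_eqE /=; apply/negP => /eqP; lia.
      by have := subset_leq_card sub; rewrite card_lt // leq_subr.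
    exists #|A| => //; apply/ffunP => x; rewrite /abc_map ffunE subnKC //.
    have := @downset n A hA x; rewrite inE => eA.
    case: ifP => h1; first by apply/eqP; rewrite eA.
    have := hc x; case: ifP => h2 e.
      case: (@vals n a b c f x ht) => // e'.
        by move: h1; rewrite -eA e' eqxx.
      by move: e; rewrite e' eqxx; lia.
    by apply/eqP; rewrite e; lia.
  - case=> i hi ->; apply/LC; split; first split.
    + move=> x y le; rewrite !ffunE.
      case h1: (x < i); case h2: (y < i); case h3: (x < i + (n - k - i)); case h4: (y < i + (n - k - i)); lia.
    + by move=> x; rewrite ffunE; case: (x < i); [|case: (x < i + (n - k - i))]; rewrite !inE eqxx ?orbT.
    + move=> x; rewrite ffunE subnKC //.
      case h1: (x < n - k); case h2: (x < i); rewrite -val_eqE /=; apply/idP/idP => [/eqP|] ?; try lia.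
split; first by move=> f [].
split.
- move=> f g /LC [hf cf] /LC [hg cg].
  apply/LC; split; first split.
  + move=> x y le; rewrite !ffunE; have := hf.1 x y le; have := hg.1 x y le.
    by case: ifP; case: ifP; lia.
  + by move=> x; rewrite ffunE; case: ifP => _; [exact: hg.2 | exact: hf.2].
  + move=> x; rewrite ffunE.
    by case: (f x <= g x).
- move=> f g /LC [hf cf] /LC [hg cg].
  apply/LC; split; first split.
  + by move=> x y le; rewrite !ffunE; apply: hg.1; apply: hf.1.
  + by move=> x; rewrite ffunE; exact: hg.2.
  + move=> x; rewrite ffunE cg -(cf x).
    by case: (@vals n a b c f x hf) => ->; rewrite -val_eqE /=; apply/idP/idP => [|/eqP] ?; have := ltn_ord b; lia.
Qed.
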